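(* A hyperfield $H$ is isomorphic to a generalised tropical hyperfield $\mathcal{T}(\Gamma)$ for some ordered abelian group $\Gamma$ if and only if $H$ is stringent, has characteristic $2$ (i.e. $0\in 1+1$) and has C-characteristic $1$ (i.e. $1\in 1+1$).
   Context: A hyperfield is $(F,+,\cdot,0,1)$ with $+$ a multivalued operation making $(F,+,0)$ a canonical hypergroup (associative, commutative, unique inverses $-x$ with $0\in x+(-x)$, and $z\in x+y\Rightarrow y\in z+(-x)$), $(F,\cdot)$ commutative with $0$ absorbing, $x(y+z)=xy+xz$, and $F\setminus\{0\}$ an abelian group with neutral $1\neq0$. Isomorphism of hyperfields: a bijection $\sigma$ preserving $0,1$, products, inverses, with $\sigma(x+y)\subseteq\sigma(x)+\sigma(y)$, whose inverse has the same properties. A hyperfield is stringent if $x+y$ is a singleton whenever $0\notin x+y$. For an ordered abelian group $(\Gamma,+,<,0)$ and $\infty>\Gamma$ with $\gamma+\infty=\infty+\gamma=\infty$, $\mathcal{T}(\Gamma)$ is the hyperfield on $\Gamma\cup\{\infty\}$ with multiplication $+$, zero $\infty$, unit $0$, and hyperaddition $x\boxplus\infty=\infty\boxplus x=\{x\}$, $x\boxplus y=\{\min\{x,y\}\}$ for $x\neq y$, $x\boxplus x=\{z:x\le z\le\infty\}$. *)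

(* Defs.v *)
(** Raw data of a hyperfield: [hadd x y z] means z \in x + y. *)
Record HypStruct := {
  hcar  : Type;
  hadd  : hcar -> hcar -> hcar -> Prop;
  hmul  : hcar -> hcar -> hcar;
  hzero : hcar;
  hone  : hcar;
  hneg  : hcar -> hcar;
  hinv  : hcar -> hcar
}.

Definition is_hyperfield (H : HypStruct) : Prop :=
  let add := hadd H in let mul := hmul H in
  let z0 := hzero H in let o1 := hone H in let ng := hneg H in
  (forall x y, exists z, add x y z) /\
  (forall x y z w, (exists u, add x y u /\ add u z w) <->
                   (exists v, add y z v /\ add x v w)) /\
  (forall x y z, add x y z <-> add y x z) /\
  (forall x z, add x z0 z <-> z = x) /\
  (forall x, add x (ng x) z0) /\
  (forall x y, add x y z0 -> y = ng x) /\
  (forall x y z, add x y z -> add z (ng x) y) /\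
  (forall x y, mul x y = mul y x) /\
  (forall x y z, mul x (mul y z) = mul (mul x y) z) /\
  (forall x, mul o1 x = x) /\
  (forall x, mul z0 x = z0) /\
  (forall x y z w, (exists u, add y z u /\ w = mul x u) <-> add (mul x y) (mul x z) w) /\
  o1 <> z0 /\
  (forall x y, x <> z0 -> y <> z0 -> mul x y <> z0) /\
  (forall x, x <> z0 -> mul x (hinv H x) = o1).

Definition stringent (H : HypStruct) : Prop :=
  forall x y, ~ hadd H x y (hzero H) ->
    exists w, forall z, hadd H x y z <-> z = w.

Definition hf_morph (H1 H2 : HypStruct) (f : hcar H1 -> hcar H2) : Prop :=
  f (hzero H1) = hzero H2 /\
  f (hone H1) = hone H2 /\
  (forall x y, f (hmul H1 x y) = hmul H2 (f x) (f y)) /\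
  (forall x, f (hneg H1 x) = hneg H2 (f x)) /\
  (forall x, x <> hzero H1 -> f (hinv H1 x) = hinv H2 (f x)) /\
  (forall x y z, hadd H1 x y z -> hadd H2 (f x) (f y) (f z)).

Definition hf_iso (H1 H2 : HypStruct) : Prop :=
  exists (f : hcar H1 -> hcar H2) (g : hcar H2 -> hcar H1),
    (forall x, g (f x) = x) /\ (forall y, f (g y) = y) /\
    hf_morph H1 H2 f /\ hf_morph H2 H1 g.

Record OrdAbGroup := {
  gcar : Type;
  gadd : gcar -> gcar -> gcar;
  g0   : gcar;
  gopp : gcar -> gcar;
  gle  : gcar -> gcar -> Prop;
  gaddA : forall a b c, gadd a (gadd b c) = gadd (gadd a b) c;
  gaddC : forall a b, gadd a b = gadd b a;
  gadd0 : forall a, gadd a g0 = a;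
  gaddN : forall a, gadd a (gopp a) = g0;
  gle_refl : forall a, gle a a;
  gle_anti : forall a b, gle a b -> gle b a -> a = b;
  gle_trans : forall a b c, gle a b -> gle b c -> gle a c;
  gle_total : forall a b, gle a b \/ gle b a;
  gle_add : forall a b c, gle a b -> gle (gadd a c) (gadd b c)
}.

(** The generalised tropical hyperfield T(Gamma); [None] plays the role of
    infinity. *)
Definition trop_add (G : OrdAbGroup) (x y z : option (gcar G)) : Prop :=
  match x, y with
  | None, _ => z = y
  | Some _, None => z = x
  | Some a, Some b =>
      (a <> b /\ ((gle G a b /\ z = Some a) \/ (gle G b a /\ z = Some b))) \/
      (a = b /\ forall c, z = Some c -> gle G a c)
  end.

Definition trop_mul (G : OrdAbGroup) (x y : option (gcar G)) : option (gcar G) :=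
  match x, y with
  | Some a, Some b => Some (gadd G a b)
  | _, _ => None
  end.

Definition tropical (G : OrdAbGroup) : HypStruct := {|
  hcar := option (gcar G);
  hadd := trop_add G;
  hmul := trop_mul G;
  hzero := None;
  hone := Some (g0 G);
  hneg := fun x => x;
  hinv := option_map (gopp G)
|}.

(* Main.v *)
Require Import Defs.
From Stdlib Require Import ClassicalEpsilon ProofIrrelevance.

Ltac unpack hH := destruct hH as (Htot & Hass & Hcom & Hz & Hneg & Hnegu & Hrev & Hmc & Hma & Hm1 & Hm0 & Hdist & H10 & Hmnz & Hinv).

Lemma mul_x1 H (hH : is_hyperfield H) x : hmul H x (hone H) = x.
Proof. unpack hH. rewrite Hmc; auto. Qed.
Lemma mul_x0 H (hH : is_hyperfield H) x : hmul H x (hzero H) = hzero H.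
Proof. unpack hH. rewrite Hmc; auto. Qed.
Lemma add0l H (hH : is_hyperfield H) y z : hadd H (hzero H) y z <-> z = y.
Proof. pose proof hH as h. unpack h. rewrite Hcom. apply Hz. Qed.


Lemma xx0 H (hH : is_hyperfield H) (h0 : hadd H (hone H) (hone H) (hzero H)) x :
  hadd H x x (hzero H).
Proof.
  pose proof (mul_x1 H hH x) as e1. pose proof (mul_x0 H hH x) as e0.
  unpack hH. rewrite <- e1 at 1 2. apply Hdist. exists (hzero H). auto.
Qed.
Lemma xxx H (hH : is_hyperfield H) (h1 : hadd H (hone H) (hone H) (hone H)) x :
  hadd H x x x.
Proof.
  pose proof (mul_x1 H hH x) as e1.
  unpack hH. rewrite <- e1. apply Hdist. exists (hone H). auto.
Qed.
Lemma negx H (hH : is_hyperfield H) (h0 : hadd H (hone H) (hone H) (hzero H)) x :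
  hneg H x = x.
Proof. pose proof (xx0 H hH h0 x). unpack hH. symmetry; auto. Qed.

Lemma no0 H (hH : is_hyperfield H) (h0 : hadd H (hone H) (hone H) (hzero H)) x y :
  x <> y -> ~ hadd H x y (hzero H).
Proof. intros d e. pose proof (negx H hH h0 x). unpack hH. apply d. rewrite (Hnegu _ _ e). auto. Qed.

Lemma elem H (hH : is_hyperfield H) (hs : stringent H)
  (h0 : hadd H (hone H) (hone H) (hzero H)) (h1 : hadd H (hone H) (hone H) (hone H)) x y z :
  x <> y -> hadd H x y z -> z = x \/ z = y.
Proof.
  intros d hz.
  destruct (hs x y (no0 H hH h0 x y d)) as [w Hw].
  assert (zw : z = w) by (apply Hw; auto). subst z.
  destruct (classic (w = y)) as [e|e]; [auto|left].
  pose proof (xx0 H hH h0 y) as y0. pose proof (xxx H hH h1 y) as y1.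
  destruct (hs w y (no0 H hH h0 w y e)) as [w2 Hw2].
  pose proof hH as hh. unpack hh.
  assert (A : hadd H w y x).
  { destruct (proj2 (Hass x y y x)) as [u [u1 u2]].
    - exists (hzero H). split; auto. apply Hz; auto.
    - apply Hw in u1. subst u. auto. }
  assert (B : hadd H w y w).
  { destruct (proj2 (Hass x y y w)) as [u [u1 u2]].
    - exists y. split; auto.
    - apply Hw in u1. subst u. auto. }
  apply Hw2 in A. apply Hw2 in B. congruence.
Qed.

Definition nz (H : HypStruct) := {x : hcar H | x <> hzero H}.

Lemma nz_eq H (a b : nz H) : proj1_sig a = proj1_sig b -> a = b.
Proof. destruct a, b; simpl; intros ->; f_equal; apply proof_irrelevance. Qed.

Lemma mul_ok H (hH : is_hyperfield H) (a b : nz H) : hmul H (proj1_sig a) (proj1_sig b) <> hzero H.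
Proof. unpack hH. destruct a, b; simpl; auto. Qed.
Lemma one_ok H (hH : is_hyperfield H) : hone H <> hzero H.
Proof. unpack hH. auto. Qed.
Lemma inv_ok H (hH : is_hyperfield H) (a : nz H) : hinv H (proj1_sig a) <> hzero H.
Proof. pose proof (mul_x0 H hH (proj1_sig a)). unpack hH. destruct a as [a p]; simpl in *.
  intro e. apply H10. rewrite <- (Hinv a p), e. auto. Qed.

Definition nzmul H hH (a b : nz H) : nz H := exist (fun x => x <> hzero H) _ (mul_ok H hH a b).
Definition nzone H hH : nz H := exist (fun x => x <> hzero H) _ (one_ok H hH).
Definition nzinv H hH (a : nz H) : nz H := exist (fun x => x <> hzero H) _ (inv_ok H hH a).
Definition nzle H (a b : nz H) : Prop := hadd H (proj1_sig a) (proj1_sig b) (proj1_sig a).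


Lemma le_anti H (hH : is_hyperfield H) (hs : stringent H)
  (h0 : hadd H (hone H) (hone H) (hzero H)) a b :
  hadd H a b a -> hadd H b a b -> a = b.
Proof.
  intros u v. destruct (classic (a = b)) as [e|e]; auto.
  destruct (hs a b (no0 H hH h0 a b e)) as [w Hw].
  pose proof hH as hh; unpack hh. apply Hcom in v.
  apply Hw in u; apply Hw in v; congruence.
Qed.

Lemma le_trans H (hH : is_hyperfield H) (hs : stringent H)
  (h0 : hadd H (hone H) (hone H) (hzero H)) (h1 : hadd H (hone H) (hone H) (hone H)) a b c :
  hadd H a b a -> hadd H b c b -> hadd H a c a.
Proof.
  intros u v.
  destruct (classic (a = b)) as [e|e]; [subst; auto|].
  destruct (classic (b = c)) as [e'|e']; [subst; auto|].
  destruct (hs a b (no0 H hH h0 a b e)) as [w Hw].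
  destruct (hs b c (no0 H hH h0 b c e')) as [w' Hw'].
  pose proof hH as hh; unpack hh.
  destruct (Htot a c) as [z hz].
  destruct (proj1 (Hass a b c z)) as [v' [v1 v2]].
  - exists a; auto.
  - apply Hw' in v1. apply Hw' in v. subst. apply Hw in v2. apply Hw in u. congruence.
Qed.

Lemma le_total H (hH : is_hyperfield H) (hs : stringent H)
  (h0 : hadd H (hone H) (hone H) (hzero H)) (h1 : hadd H (hone H) (hone H) (hone H)) a b :
  hadd H a b a \/ hadd H b a b.
Proof.
  destruct (classic (a = b)) as [e|e]; [subst; left; apply xxx; auto|].
  pose proof hH as hh; unpack hh.
  destruct (Htot a b) as [z hz].
  destruct (elem H hH hs h0 h1 a b z e hz) as [->| ->]; auto.
  right; apply Hcom; auto.
Qed.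

Lemma le_add H (hH : is_hyperfield H) a b c :
  hadd H a b a -> hadd H (hmul H a c) (hmul H b c) (hmul H a c).
Proof.
  intro u. unpack hH. rewrite (Hmc a c), (Hmc b c). apply Hdist. exists a; auto.
Qed.

Definition mkG H (hH : is_hyperfield H) (hs : stringent H)
  (h0 : hadd H (hone H) (hone H) (hzero H)) (h1 : hadd H (hone H) (hone H) (hone H)) : OrdAbGroup.
Proof.
  refine {| gcar := nz H; gadd := nzmul H hH; g0 := nzone H hH; gopp := nzinv H hH;
            gle := nzle H |}.
  - intros; apply nz_eq; simpl. unpack hH; auto.
  - intros; apply nz_eq; simpl. unpack hH; auto.
  - intros; apply nz_eq; simpl. apply mul_x1; auto.
  - intros [a p]; apply nz_eq; simpl. unpack hH; auto.
  - intros; apply xxx; auto.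
  - intros [a p] [b q] u v; apply nz_eq; simpl. eapply le_anti; eauto.
  - intros [a p] [b q] [c r]; unfold nzle; simpl. eapply le_trans; eauto.
  - intros [a p] [b q]; unfold nzle; simpl. eapply le_total; eauto.
  - intros [a p] [b q] [c r]; unfold nzle; simpl. apply le_add; auto.
Defined.

Definition fH H (x : hcar H) : option (nz H) :=
  match excluded_middle_informative (x = hzero H) with
  | left _ => None
  | right p => Some (exist (fun x => x <> hzero H) x p)
  end.
Definition gH H (y : option (nz H)) : hcar H :=
  match y with None => hzero H | Some s => proj1_sig s end.

Lemma fH0 H : fH H (hzero H) = None.
Proof. unfold fH. destruct excluded_middle_informative; congruence. Qed.
Lemma fHs H x (p : x <> hzero H) : fH H x = Some (exist _ x p).
Proof. unfold fH. destruct excluded_middle_informative; [congruence|].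
  f_equal; apply nz_eq; reflexivity. Qed.

Lemma bwd H (hH : is_hyperfield H) (hs : stringent H)
  (h0 : hadd H (hone H) (hone H) (hzero H)) (h1 : hadd H (hone H) (hone H) (hone H)) :
  hf_iso H (tropical (mkG H hH hs h0 h1)).
Proof.
  pose proof (negx H hH h0) as NX.
  pose proof (mul_x0 H hH) as M0.
  pose proof (add0l H hH) as A0.
  pose proof (xx0 H hH h0) as XX0.
  pose proof (elem H hH hs h0 h1) as EL.
  pose proof hH as hh; unpack hh.
  exists (fH H), (gH H). split; [|split; [|split]].
  - intros x. unfold gH, fH. destruct excluded_middle_informative; auto.
  - intros [[y p]|]; simpl; [apply fHs|apply fH0].
  - repeat split.
    + apply fH0.
    + simpl. rewrite (fHs H _ H10). f_equal. apply nz_eq; reflexivity.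
    + intros x y. simpl.
      destruct (classic (x = hzero H)) as [ex|ex].
      { subst. rewrite Hm0, fH0. reflexivity. }
      destruct (classic (y = hzero H)) as [ey|ey].
      { subst. rewrite M0, fH0, (fHs H x ex). reflexivity. }
      rewrite (fHs H x ex), (fHs H y ey), (fHs H _ (Hmnz x y ex ey)). simpl.
      f_equal; apply nz_eq; reflexivity.
    + intros x; simpl; rewrite NX; auto.
    + intros x ex; simpl. rewrite (fHs H x ex).
      assert (q : hinv H x <> hzero H) by exact (inv_ok H hH (exist _ x ex)).
      rewrite (fHs H _ q). simpl. f_equal; apply nz_eq; reflexivity.
    + intros x y z hz. simpl.
      destruct (classic (x = hzero H)) as [ex|ex].
      { subst. rewrite fH0. simpl. apply A0 in hz. subst; auto. }
      destruct (classic (y = hzero H)) as [ey|ey].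
      { subst. rewrite (fHs H x ex), fH0. simpl. apply Hz in hz. subst; apply fHs. }
      rewrite (fHs H x ex), (fHs H y ey). simpl.
      destruct (classic (x = y)) as [exy|exy].
      * subst y. right. split; [f_equal; apply proof_irrelevance|].
        intros [c cp] e. unfold nzle; simpl.
        destruct (classic (z = hzero H)) as [ez|ez].
        { subst. rewrite fH0 in e. discriminate. }
        rewrite (fHs H z ez) in e. inversion e; subst.
        apply Hcom. pose proof (Hrev _ _ _ hz) as r. rewrite NX in r. exact r.
      * left. split; [intro e; inversion e; auto|].
        unfold nzle; simpl.
        destruct (EL x y z exy hz) as [->| ->].
        -- left. split; auto. apply fHs.
        -- right. split; [apply Hcom; auto| apply fHs].
  - repeat split; simpl; auto.
    + intros [a|] [b|]; simpl; auto.
    + intros [a|] e; simpl; [reflexivity|congruence].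
    + intros [[a p]|] [[b q]|] z hz; simpl in *.
      * destruct hz as [[d [[l e]|[l e]]]|[e l]]; subst; simpl.
        -- exact l.
        -- apply Hcom; exact l.
        -- inversion e; subst. destruct z as [[c r]|]; simpl.
           ++ specialize (l _ eq_refl). unfold nzle in l; simpl in l.
              pose proof (Hrev _ _ _ l) as r2. rewrite NX in r2. exact r2.
           ++ apply XX0.
      * subst. simpl. apply Hz; auto.
      * subst. simpl. apply A0; auto.
      * subst. simpl. apply A0; auto.
Qed.
Lemma fwd (H : HypStruct) (G : OrdAbGroup) : hf_iso H (tropical G) ->
  stringent H /\ hadd H (hone H) (hone H) (hzero H) /\ hadd H (hone H) (hone H) (hone H).
Proof.
  intros (f & g & gf & fg & mf & mg).
  destruct mg as (g0 & g1 & gm & gn & gi & ga).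
  destruct mf as (f0 & f1 & fm & fn & fi & fa).
  split; [|split].
  - intros x y hn.
    assert (hN : ~ trop_add G (f x) (f y) None).
    { intro e. apply hn. rewrite <- (gf x), <- (gf y), <- g0. exact (ga _ _ _ e). }
    assert (Hw : exists w', forall z', trop_add G (f x) (f y) z' <-> z' = w').
    { destruct (f x) as [a|] eqn:Ea; destruct (f y) as [b|] eqn:Eb; simpl in *.
      - destruct (classic (a = b)) as [ab|ab].
        + exfalso; apply hN; right; split; [exact ab| intros c e; discriminate].
        + destruct (gle_total G a b) as [l|l].
          * exists (Some a); intros z'; split.
            -- intros [[_ [[_ e]|[l' e]]]|[e _]]; auto.
               destruct ab; apply gle_anti; auto. contradiction.
            -- intros ->; left; split; auto.
          * exists (Some b); intros z'; split.
            -- intros [[_ [[l' e]|[_ e]]]|[e _]]; auto.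
               destruct ab; apply gle_anti; auto. contradiction.
            -- intros ->; left; split; auto.
      - exists (Some a); intros; split; auto.
      - exists (Some b); intros; split; auto.
      - exists None; intros; split; auto. }
    destruct Hw as [w' Hw]. exists (g w'). intros z; split.
    + intro h. apply fa in h. apply Hw in h. rewrite <- h. auto.
    + intros ->. rewrite <- (gf x), <- (gf y). apply ga. apply Hw. reflexivity.
  - rewrite <- g1, <- g0. apply ga. simpl. right. split; auto. intros c e; discriminate.
  - rewrite <- g1. apply ga. simpl. right. split; auto. intros c e; inversion e; subst.
    apply gle_refl.
Qed.

Theorem theorem5p2 (H : HypStruct) (hH : is_hyperfield H) :
  (exists G : OrdAbGroup, hf_iso H (tropical G)) <->
  (stringent H /\
   hadd H (hone H) (hone H) (hzero H) /\
   hadd H (hone H) (hone H) (hone H)).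
Proof.
  split.
  - intros [G iso]. exact (fwd H G iso).
  - intros (hs & h0 & h1). exists (mkG H hH hs h0 h1). apply bwd.
Qed.
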